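(* Let $0<q<p\le 1$, let $n\in\mathbb{N}$, $k\in\{0,1,2,\dots\}$, and for $t\in[0,1]$ put $$b_{n,k}^{(p,q)}(qt)=\frac{1}{p^{k(n-1)+n(n-1)/2}}\begin{bmatrix}n+k+1\\k\end{bmatrix}_{p,q}(qt)^k(1-qt)_{p,q}^{n}.$$ Then for every $s=0,1,2,\dots$, $$\int_0^1 b_{n,k}^{(p,q)}(qt)\,t^s\,d_{p,q}t=\frac{[n+k+1]_{p,q}!\,[k+s]_{p,q}!}{[k]_{p,q}!\,[n+k+s+1]_{p,q}!}\cdot\frac{(pq)^k}{[n+1]_{p,q}}\,p^{n(s+1)}.$$
   Context: For $0<q<p\le1$: $[n]_{p,q}=\frac{p^n-q^n}{p-q}$; $[n]_{p,q}!=[1]_{p,q}[2]_{p,q}\cdots[n]_{p,q}$ for $n\ge1$ and $[0]_{p,q}!=1$; $\begin{bmatrix}n\\k\end{bmatrix}_{p,q}=\frac{[n]_{p,q}!}{[k]_{p,q}![n-k]_{p,q}!}$; $(x+y)_{p,q}^n=\prod_{j=0}^{n-1}(p^jx+q^jy)$, so $(1-qt)^n_{p,q}=\prod_{j=0}^{n-1}(p^j-q^{j+1}t)$. The $(p,q)$-integral is $\int_0^a f(t)\,d_{p,q}t=(p-q)a\sum_{j=0}^\infty \frac{q^j}{p^{j+1}}f\!\left(\frac{q^j}{p^{j+1}}a\right)$. *)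

(* Defs.v *)
From Stdlib Require Import Reals.
From Coquelicot Require Import Coquelicot.
Open Scope R_scope.

Definition pq_num (p q : R) (n : nat) : R := (p ^ n - q ^ n) / (p - q).

Fixpoint pq_fact (p q : R) (n : nat) : R :=
  match n with
  | O => 1
  | S m => pq_fact p q m * pq_num p q (S m)
  end.

Definition pq_binom (p q : R) (n k : nat) : R :=
  pq_fact p q n / (pq_fact p q k * pq_fact p q (n - k)).

Fixpoint pq_binpow (p q x y : R) (n : nat) : R :=
  match n with
  | O => 1
  | S m => pq_binpow p q x y m * (p ^ m * x + q ^ m * y)
  end.

Definition is_pq_integral (p q : R) (f : R -> R) (a v : R) : Prop :=
  is_series (fun j : nat => (p - q) * a * (q ^ j / p ^ (S j))
                              * f (q ^ j / p ^ (S j) * a)) v.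

(* b_{n,k}^{(p,q)}(q t), with (1 - q t)^n_{p,q} = (1 + (-(q t)))^n_{p,q}
   = prod_{j<n} (p^j - q^(j+1) t).  Exponent k(n-1) + n(n-1)/2 (n >= 1). *)
Definition bpq (p q : R) (n k : nat) (t : R) : R :=
  / p ^ (k * (n - 1) + n * (n - 1) / 2)
  * pq_binom p q (n + k + 1) k * (q * t) ^ k * pq_binpow p q 1 (- (q * t)) n.

(* Main.v *)
Require Import Defs.
From Stdlib Require Import Reals Lra Lia.
From Coquelicot Require Import Coquelicot.
Open Scope R_scope.

Lemma is_pq_lin (p q : R) f g a v w c d :
  is_pq_integral p q f a v -> is_pq_integral p q g a w ->
  is_pq_integral p q (fun t => c * f t + d * g t) a (c * v + d * w).
Proof.
  unfold is_pq_integral; intros Hf Hg.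
  apply (is_series_scal c) in Hf. apply (is_series_scal d) in Hg.
  pose proof (is_series_plus _ _ _ _ Hf Hg) as H.
  eapply is_series_ext; [|exact H].
  intros j; simpl. unfold plus, scal; simpl. unfold mult; simpl. ring.
Qed.

Lemma is_pq_ext (p q : R) f g a v :
  (forall t, f t = g t) -> is_pq_integral p q f a v -> is_pq_integral p q g a v.
Proof.
  unfold is_pq_integral; intros E H. eapply is_series_ext; [|exact H].
  intros j; simpl. rewrite E. reflexivity.
Qed.

Lemma pow_lt_S (p q : R) a : 0 < q -> q < p -> q ^ S a < p ^ S a.
Proof.
  intros Hq Hp. induction a.
  - simpl; lra.
  - change (q * q ^ S a < p * p ^ S a).
    assert (0 < q ^ S a) by (apply pow_lt; lra). nra.
Qed.

Lemma num_pos (p q : R) a : 0 < q -> q < p -> 0 < pq_num p q (S a).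
Proof.
  intros Hq Hp. unfold pq_num. pose proof (pow_lt_S p q a Hq Hp).
  apply Rdiv_lt_0_compat; lra.
Qed.

Lemma fact_pos (p q : R) a : 0 < q -> q < p -> 0 < pq_fact p q a.
Proof.
  intros Hq Hp. induction a; simpl. lra.
  pose proof (num_pos p q a Hq Hp). nra.
Qed.

Fixpoint E (p : R) (n : nat) : R :=
  match n with O => 1 | S m => E p m * p ^ m end.

Definition g (p q : R) n m t := t ^ m * pq_binpow p q 1 (- (q * t)) n.

Definition Fv (p q : R) n m :=
  pq_fact p q m * pq_fact p q n / pq_fact p q (n + m + 1) * p ^ (n * (m + 1)) * E p n.

Lemma pm (x : R) j m : (x ^ S m) ^ j = x ^ j * (x ^ j) ^ m.
Proof. rewrite <- !pow_mult, <- pow_add. f_equal. lia. Qed.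

Lemma geom_term (p q : R) m j : 0 < p ->
  (p - q) / p ^ S m * (q ^ S m / p ^ S m) ^ j =
  (p - q) * 1 * (q ^ j / p ^ S j) * (q ^ j / p ^ S j * 1) ^ m.
Proof.
  intros Hp. unfold Rdiv. rewrite Rmult_1_r, Rpow_mult_distr, !pow_inv, !Rpow_mult_distr, !pow_inv.
  rewrite !pm. simpl. rewrite pow1.
  replace ((p ^ m) ^ j) with ((p ^ j) ^ m) by (rewrite <- !pow_mult; f_equal; lia).
  assert (p ^ j <> 0) by (apply pow_nonzero; lra).
  assert (p ^ m <> 0) by (apply pow_nonzero; lra).
  assert ((p ^ j) ^ m <> 0) by (apply pow_nonzero; auto).
  field. repeat split; auto; lra.
Qed.

Lemma base (p q : R) m : 0 < q -> q < p ->
  is_pq_integral p q (fun t => t ^ m) 1 (Fv p q 0 m).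
Proof.
  intros Hq Hp. unfold is_pq_integral, Fv.
  set (r := q ^ S m / p ^ S m).
  assert (Hqm := pow_lt_S p q m Hq Hp).
  assert (Hpm : 0 < p ^ S m) by (apply pow_lt; lra).
  assert (Hqm0 : 0 < q ^ S m) by (apply pow_lt; lra).
  assert (Hr : Rabs r < 1).
  { unfold r. rewrite Rabs_pos_eq. apply (Rmult_lt_reg_r (p ^ S m)); auto.
    unfold Rdiv. rewrite Rmult_assoc, Rinv_l by lra. lra.
    apply Rlt_le, Rdiv_lt_0_compat; lra. }
  pose proof (is_series_scal ((p - q) / p ^ S m) _ _ (is_series_geom r Hr)) as H.
  replace (pq_fact p q m * pq_fact p q 0 / pq_fact p q (0 + m + 1) *
     p ^ (0 * (m + 1)) * E p 0) with (scal ((p - q) / p ^ S m) (/ (1 - r))).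
  - eapply is_series_ext; [|exact H]. intros j. apply geom_term; lra.
  - unfold scal; simpl; unfold mult; simpl.
    rewrite Nat.add_1_r. simpl pq_fact. unfold r, pq_num.
    pose proof (fact_pos p q m Hq Hp). simpl in *.
    assert (p ^ m <> 0) by (apply pow_nonzero; lra). field. repeat split; auto; lra.
Qed.

Lemma step_eq (p q : R) n m : 0 < q -> q < p ->
  Fv p q (S n) m = p ^ n * Fv p q n m + (- q ^ S n) * Fv p q n (S m).
Proof.
  intros Hq Hp. unfold Fv.
  replace (S n + m + 1)%nat with (S (n + m + 1)) by lia.
  replace (n + S m + 1)%nat with (S (n + m + 1)) by lia.
  replace (S n * (m + 1))%nat with (n * (m + 1) + S m)%nat by lia.
  replace (n * (S m + 1))%nat with (n * (m + 1) + n)%nat by lia.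
  simpl pq_fact. simpl E. rewrite !pow_add.
  pose proof (fact_pos p q m Hq Hp). pose proof (fact_pos p q n Hq Hp).
  pose proof (fact_pos p q (n + m + 1) Hq Hp).
  pose proof (num_pos p q (n + m + 1) Hq Hp).
  unfold pq_num in *.
  replace (S (n + m + 1)) with (S m + S n)%nat in * by lia.
  pose proof (pow_lt_S p q (S m + n) Hq Hp) as HH.
  replace (S (S m + n)) with (S m + S n)%nat in HH by lia.
  rewrite !pow_add in *.
  assert (p ^ n <> 0) by (apply pow_nonzero; lra).
  assert (p ^ (n * (m + 1)) <> 0) by (apply pow_nonzero; lra).
  field. repeat split; try lra.
Qed.

Lemma main_int (p q : R) n : 0 < q -> q < p -> forall m,
  is_pq_integral p q (g p q n m) 1 (Fv p q n m).
Proof.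
  intros Hq Hp. induction n; intros m.
  - eapply is_pq_ext; [|apply base; auto]. intros t. unfold g; simpl; ring.
  - rewrite step_eq by auto.
    eapply is_pq_ext; [|apply is_pq_lin; apply IHn].
    intros t. unfold g; simpl. ring.
Qed.

Lemma E_eq (p : R) n : E p n = p ^ (n * (n - 1) / 2).
Proof.
  induction n. reflexivity.
  simpl E. rewrite IHn, <- pow_add. f_equal.
  replace (S n * (S n - 1))%nat with (n * (n - 1) + n * 2)%nat by (destruct n; simpl; lia).
  rewrite Nat.div_add by lia. lia.
Qed.

Theorem lemma2 (p q : R) (n k s : nat) :
  0 < q -> q < p -> p <= 1 -> (1 <= n)%nat ->
  is_pq_integral p q (fun t => bpq p q n k t * t ^ s) 1
    (pq_fact p q (n + k + 1) * pq_fact p q (k + s)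
       / (pq_fact p q k * pq_fact p q (n + k + s + 1))
     * ((p * q) ^ k / pq_num p q (n + 1)) * p ^ (n * (s + 1))).
Proof.
  intros Hq Hp Hp1 Hn.
  set (C := / p ^ (k * (n - 1) + n * (n - 1) / 2) * pq_binom p q (n + k + 1) k * q ^ k).
  pose proof (is_pq_lin p q _ _ 1 _ _ C 0 (main_int p q n Hq Hp (k + s))
                (main_int p q n Hq Hp (k + s))) as H.
  eapply is_pq_ext in H.
  2:{ intros t. unfold g. reflexivity. }
  replace (pq_fact p q (n + k + 1) * pq_fact p q (k + s)
       / (pq_fact p q k * pq_fact p q (n + k + s + 1))
     * ((p * q) ^ k / pq_num p q (n + 1)) * p ^ (n * (s + 1)))
    with (C * Fv p q n (k + s) + 0 * Fv p q n (k + s)).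
  {  eapply is_pq_ext; [|exact H].
  intros t. unfold C, bpq. rewrite Rpow_mult_distr, (pow_add t k s). ring.
  }
  unfold C, Fv, pq_binom. rewrite (pow_add p (k * (n - 1))), <- (E_eq p n).
  replace (n + k + 1 - k)%nat with (n + 1)%nat by lia.
  replace (n + (k + s) + 1)%nat with (n + k + s + 1)%nat by lia.
  replace (n * (k + s + 1))%nat with (k * (n - 1) + k + n * (s + 1))%nat by nia.
  replace (n + 1)%nat with (S n) by lia. simpl (pq_fact p q (S n)).
  rewrite !pow_add, Rpow_mult_distr.
  pose proof (fact_pos p q k Hq Hp). pose proof (fact_pos p q n Hq Hp).
  pose proof (fact_pos p q (n + k + s + 1) Hq Hp).
  pose proof (num_pos p q n Hq Hp).
  assert (0 < E p n) by (rewrite E_eq; apply pow_lt; lra).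
  assert (p ^ (k * (n - 1)) <> 0) by (apply pow_nonzero; lra).
  assert (p ^ k <> 0) by (apply pow_nonzero; lra).
  field. repeat split; lra.
Qed.
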